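(* Let $m,n\ge1$ and let $\lambda\subseteq\nu\subseteq(n-1)^{m-1}$ be partitions. Then the polytope $\mathrm{PASM}(\nu/\lambda,m,n)$ is integrally equivalent to the order polytope $\mathcal{O}(P(\nu/\lambda))$.
   Context: A partition $\mu=(\mu_1\ge\mu_2\ge\cdots)$ is a weakly decreasing sequence of nonnegative integers with finitely many nonzero terms, identified with the set of positions $\{(i,j):i\ge1,1\le j\le\mu_i\}$; $\mu\subseteq\nu$ means $\mu_i\le\nu_i$ for all $i$, and $\mu\subseteq a^b$ means $\mu$ has at most $b$ positive parts and $\mu_1\le a$. For $\mu\subseteq(n-1)^{m-1}$, the $m\times n$ matrix $M^\mu$ has entries $M^\mu_{1,\mu_1+1}=1$; for each $1\le k\le m-1$ with $\mu_k>\mu_{k+1}$, $M^\mu_{k+1,\mu_{k+1}+1}=1$ and $M^\mu_{k+1,\mu_k+1}=-1$; all other entries $0$. $\mathrm{PASM}(\nu/\lambda,m,n)$ is the convex hull in $\mathbb{R}^{mn}$ of $\{M^\mu:\lambda\subseteq\mu\subseteq\nu\}$. $P(\nu/\lambda)$ is the poset whose elements are the positions $(i,j)$ in $\nu$ but not in $\lambda$, with $(i,j)\le(i',j')$ iff $i\le i'$ and $j\le j'$. For a finite poset $P$, $\mathcal{O}(P)\subseteq\mathbb{R}^P$ is the set of $f:P\to\mathbb{R}$ with $0\le f(p)\le 1$ for all $p$ and $f(p)\le f(q)$ whenever $p\le q$. Integer polytopes $\mathcal{P}\subset\mathbb{R}^d$, $\mathcal{Q}\subset\mathbb{R}^r$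 are integrally equivalent if there is an affine map $f:\mathbb{R}^d\to\mathbb{R}^r$ mapping $\mathcal{P}$ bijectively onto $\mathcal{Q}$ and $\mathbb{Z}^d\cap\mathrm{aff}(\mathcal{P})$ bijectively onto $\mathbb{Z}^r\cap\mathrm{aff}(\mathcal{Q})$, where $\mathrm{aff}$ is affine span. *)

(* Defs.v *)
From mathcomp Require Import all_boot all_order all_algebra.
From mathcomp Require Import reals.
Set Implicit Arguments. Unset Strict Implicit. Unset Printing Implicit Defensive.
Import Order.TTheory GRing.Theory Num.Theory.
Local Open Scope ring_scope.

Section Defs.
Variable R : realType.

Definition conv {I : finType} (S : (I -> R) -> Prop) : (I -> R) -> Prop :=
  fun x => exists (k : nat) (p : 'I_k -> I -> R) (w : 'I_k -> R),
    (forall t, S (p t)) /\ (forall t, 0 <= w t) /\ (\sum_(t < k) w t = 1) /\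
    (forall i, x i = \sum_(t < k) w t * p t i).

Definition aff {I : finType} (S : (I -> R) -> Prop) : (I -> R) -> Prop :=
  fun x => exists (k : nat) (p : 'I_k -> I -> R) (w : 'I_k -> R),
    (forall t, S (p t)) /\ (\sum_(t < k) w t = 1) /\
    (forall i, x i = \sum_(t < k) w t * p t i).

Definition is_affine {I J : finType} (f : (I -> R) -> (J -> R)) : Prop :=
  exists (A : J -> I -> R) (b : J -> R),
    forall x j, f x j = b j + \sum_(i : I) A j i * x i.

Definition integral_pt {I : finType} (x : I -> R) : Prop :=
  forall i, x i \is a Num.int.

Definition bij_onto {X Y : Type} (f : X -> Y) (A : X -> Prop) (B : Y -> Prop) :=
  [/\ (forall x, A x -> B (f x)),
      (forall x y, A x -> A y -> f x = f y -> x = y) &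
      (forall y, B y -> exists x, A x /\ f x = y)].

Definition integrally_equivalent {I J : finType}
    (P : (I -> R) -> Prop) (Q : (J -> R) -> Prop) : Prop :=
  exists f : (I -> R) -> (J -> R),
    [/\ is_affine f, bij_onto f P Q &
        bij_onto f (fun x => integral_pt x /\ aff P x)
                   (fun y => integral_pt y /\ aff Q y)].

Definition order_polytope {T : finType} (le : rel T) : (T -> R) -> Prop :=
  fun f => (forall p, 0 <= f p <= 1) /\ (forall p q, le p q -> f p <= f q).

(* The matrix M^mu (0-indexed; mu i stands for mu_{i+1}) as a point of R^{m x n}. *)
Definition Mmu (m n : nat) (mu : nat -> nat) : 'I_m * 'I_n -> R :=
  fun rc => let r := val rc.1 in let c := val rc.2 in
    if r == 0%N then ((c == mu 0%N) : nat)%:R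
    else if (mu r < mu r.-1)%N then ((c == mu r) : nat)%:R - ((c == mu r.-1) : nat)%:R
    else 0.

End Defs.

(* Partitions as functions nat -> nat, 0-indexed: mu i = mu_{i+1}. *)
Definition is_partition (mu : nat -> nat) : Prop :=
  (forall i, mu i.+1 <= mu i)%N /\ exists N, forall i, (N <= i)%N -> mu i = 0%N.

Definition subpart (mu nu : nat -> nat) : Prop := forall i, (mu i <= nu i)%N.

(* mu ⊆ a^b : at most b positive parts and mu_1 <= a *)
Definition in_box (a b : nat) (mu : nat -> nat) : Prop :=
  (forall i, (mu i <= a)%N) /\ (forall i, (b <= i)%N -> mu i = 0%N).

Definition PASM (R : realType) (m n : nat) (lam nu : nat -> nat)
  : ('I_m * 'I_n -> R) -> Prop :=
  conv (fun x => exists mu, [/\ is_partition mu, subpart lam mu,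
                               subpart mu nu & x = @Mmu R m n mu]).

(* Cells of nu/lam (0-indexed (i,j) stands for position (i+1,j+1));
   when nu ⊆ (n-1)^(m-1) all cells of nu lie in 'I_m * 'I_n. *)
Definition skew_cell (m n : nat) (lam nu : nat -> nat) (c : 'I_m * 'I_n) : bool :=
  (lam c.1 <= c.2 < nu c.1)%N.

Definition skew_poset (m n : nat) (lam nu : nat -> nat) : finType :=
  {c : 'I_m * 'I_n | skew_cell lam nu c}.

Definition skew_le (m n : nat) (lam nu : nat -> nat) : rel (skew_poset m n lam nu) :=
  fun p q => ((val p).1 <= (val q).1)%N && ((val p).2 <= (val q).2)%N.

(* Main.v *)
Require Import Defs.
From mathcomp Require Import all_boot all_order all_algebra.
From mathcomp Require Import reals boolp zify ring lra.
Set Implicit Arguments. Unset Strict Implicit. Unset Printing Implicit Defensive.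
Import Order.TTheory GRing.Theory Num.Theory.
Local Open Scope ring_scope.

Section Gen.
Variable R : realType.

Definition combp {I J : finType} (f : (I -> R) -> (J -> R)) :=
  forall k (p : 'I_k -> I -> R) (w : 'I_k -> R), \sum_(t < k) w t = 1 ->
    f (fun i => \sum_(t < k) w t * p t i) = (fun j => \sum_(t < k) w t * f (p t) j).

Lemma conv_aff {I : finType} (S : (I -> R) -> Prop) x : conv S x -> aff S x.
Proof. by move=> [k [p [w [H1 [H2 [H3 H4]]]]]]; exists k, p, w. Qed.

Lemma conv_pt {I : finType} (S : (I -> R) -> Prop) x : S x -> conv S x.
Proof.
move=> Sx; exists 1%N, (fun _ => x), (fun _ => 1); split => //; split => //.
split; first by rewrite big_ord1.
by move=> i; rewrite big_ord1 mul1r.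
Qed.

Lemma conv_comb {I : finType} (S : (I -> R) -> Prop) v z a :
  S v -> conv S z -> 0 <= a <= 1 ->
  conv S (fun i => a * v i + (1 - a) * z i).
Proof.
move=> Sv [k [p [w [H1 [H2 [H3 H4]]]]]] /andP[a0 a1].
exists k.+1, (fun t => if unlift ord0 t is Some t' then p t' else v),
  (fun t => if unlift ord0 t is Some t' then (1 - a) * w t' else a).
split; first by move=> t; case: unliftP.
split; first by move=> t; case: unliftP => * //; apply: mulr_ge0 => //; rewrite subr_ge0.
split.
  rewrite big_ord_recl unlift_none; under eq_bigr => t _ do rewrite liftK.
  by rewrite -mulr_sumr H3 mulr1 addrC subrK.
move=> i; rewrite big_ord_recl unlift_none H4; congr (_ + _).
rewrite mulr_sumr; apply: eq_bigr => t _; by rewrite liftK mulrA.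
Qed.

Lemma aff_id {I : finType} (S : (I -> R) -> Prop) (H : (I -> R) -> (I -> R)) x :
  combp H -> (forall s, S s -> H s = s) -> aff S x -> H x = x.
Proof.
move=> cH HS [k [p [w [H1 [H2 H3]]]]].
have -> : x = (fun i => \sum_(t < k) w t * p t i) by apply: funext.
rewrite cH //; apply: funext => i /=; apply: eq_bigr => t _; by rewrite HS.
Qed.

Lemma combp_comp {I J K : finType} (f : (I -> R) -> (J -> R)) (g : (J -> R) -> (K -> R)) :
  combp f -> combp g -> combp (fun x => g (f x)).
Proof. move=> cf cg k p w Hw /=; by rewrite cf // cg. Qed.

End Gen.

Section Main.
Variables (R : realType) (m n : nat) (lam nu : nat -> nat).
Local Notation PT := (skew_poset m n lam nu).

Lemma part_anti mu i i' : is_partition mu -> (i <= i')%N -> (mu i' <= mu i)%N.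
Proof.
move=> [Hd _]; elim: i' => [|i' IH]; first by rewrite leqn0 => /eqP->.
rewrite leq_eqVlt => /orP[/eqP->//|]; rewrite ltnS => /IH.
exact: leq_trans (Hd i').
Qed.

Definition Acoef (c : PT) (rs : 'I_m * 'I_n) : R :=
  ((rs.1 <= (val c).1)%N && (rs.2 <= (val c).2)%N)%:R.
Definition Ff (x : 'I_m * 'I_n -> R) : PT -> R :=
  fun c => \sum_rs Acoef c rs * x rs.

Lemma sum_ind N j a : (j < N)%N ->
  \sum_(s < N) ((s <= j)%N%:R * ((s == a :> nat) : nat)%:R) = ((a <= j)%N%:R : R).
Proof.
move=> Hj; case: (ltnP a N) => Ha.
  rewrite (bigD1 (Ordinal Ha)) //= eqxx mulr1 big1 ?addr0 // => s Hs.
  suff -> : (val s == a) = false by rewrite mulr0.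
  apply/negbTE; apply: contra Hs => /eqP E; apply/eqP/val_inj => /=; exact E.
rewrite big1; last first.
  move=> s _; suff -> : (val s == a) = false by rewrite mulr0.
  apply/negbTE; change (nat_of_ord s != a); have := ltn_ord s; lia.
suff -> : (a <= j)%N = false by [].
lia.
Qed.

Lemma sum_prefix N i (g : nat -> R) : (i < N)%N ->
  \sum_(r < N) ((r <= i)%N%:R * g r) = \sum_(0 <= r < i.+1) g r.
Proof.
move=> Hi; rewrite -(big_mkord xpredT (fun r => (r <= i)%N%:R * g r)).
rewrite (big_cat_nat (n := i.+1)) //=.
have -> : \sum_(i.+1 <= r < N) (r <= i)%N%:R * g r = 0.
  rewrite big_nat_cond big1 // => r /andP[/andP[Hr _] _].
  suff -> : (r <= i)%N = false by rewrite mul0r.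
  lia.
rewrite addr0.
rewrite big_nat_cond [RHS]big_nat_cond; apply: eq_bigr => r /andP[/andP[_ Hr] _].
by rewrite ltnS in Hr; rewrite Hr mul1r.
Qed.

Definition RS (mu : nat -> nat) (r j : nat) : R :=
  (mu r <= j)%N%:R - (if r is r'.+1 then (mu r' <= j)%N%:R else 0).

Lemma rowsum mu (r : 'I_m) j : is_partition mu -> (j < n)%N ->
  \sum_(s < n) ((s <= j)%N%:R * @Mmu R m n mu (r, s)) = RS mu r j.
Proof.
move=> Pmu Hj; rewrite /Mmu /RS /=.
case: (nat_of_ord r) => [|r'] /=.
  by rewrite sum_ind // subr0.
have [Hlt|Hge] := ltnP (mu r'.+1) (mu r').
  under eq_bigr do rewrite mulrBr.
  by rewrite sumrB !sum_ind.
have -> : mu r'.+1 = mu r'.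
  have := Pmu.1 r'; move: Hge; lia.
by rewrite subrr big1 // => s _; rewrite mulr0.
Qed.

Lemma FM mu c : is_partition mu ->
  Ff (@Mmu R m n mu) c = (mu (val c).1 <= (val c).2)%N%:R.
Proof.
move=> Pmu; rewrite /Ff.
have -> : \sum_rs Acoef c rs * @Mmu R m n mu rs =
   \sum_(r < m) \sum_(s < n) (((r <= (val c).1)%N%:R * (s <= (val c).2)%N%:R) * @Mmu R m n mu (r, s)).
  rewrite pair_bigA; apply: eq_bigr => -[r s] _.
  by rewrite /Acoef /= -natrM mulnb.
under eq_bigr do (under eq_bigr do rewrite -mulrA; rewrite -mulr_sumr rowsum //).
rewrite (sum_prefix (fun r => RS mu r _)) //.
set i := nat_of_ord (val c).1; set j := nat_of_ord (val c).2.
elim: i => [|i IH]; first by rewrite big_nat1 /RS subr0.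
by rewrite big_nat_recr //= IH /RS addrC subrK.
Qed.


Definition Unat (y : PT -> R) (i j : nat) : R :=
  if [pick c : PT | ((val c).1 == i :> nat) && ((val c).2 == j :> nat)] is Some c
  then y c else (~~ (j < lam i)%N)%:R.

Definition Wy (y : PT -> R) (i j : nat) : R :=
  match i, j with i'.+1, j'.+1 => Unat y i' j' | _, _ => 0 end.

Definition Gg (y : PT -> R) : 'I_m * 'I_n -> R :=
  fun rs => let r := nat_of_ord rs.1 in let s := nat_of_ord rs.2 in
    Wy y r.+1 s.+1 - Wy y r.+1 s - Wy y r s.+1 + Wy y r s.

Lemma Unat_comb k (p : 'I_k -> PT -> R) (w : 'I_k -> R) i j :
  \sum_(t < k) w t = 1 ->
  Unat (fun c => \sum_(t < k) w t * p t c) i j = \sum_(t < k) w t * Unat (p t) i j.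
Proof.
move=> Hw; rewrite /Unat; case: pickP => [c _ //|_].
by rewrite -mulr_suml Hw mul1r.
Qed.

Lemma Wy_comb k (p : 'I_k -> PT -> R) (w : 'I_k -> R) i j :
  \sum_(t < k) w t = 1 ->
  Wy (fun c => \sum_(t < k) w t * p t c) i j = \sum_(t < k) w t * Wy (p t) i j.
Proof.
move=> Hw; case: i => [|i]; case: j => [|j] /=; rewrite ?Unat_comb //;
  by rewrite big1 // => t _; rewrite mulr0.
Qed.

Lemma Gg_comb : combp Gg.
Proof.
move=> k p w Hw; apply: funext => rs; rewrite /Gg !Wy_comb //.
rewrite -!sumrB -big_split /=; apply: eq_bigr => t _; ring.
Qed.

Lemma Ff_comb : combp Ff.
Proof.
move=> k p w Hw; apply: funext => c; rewrite /Ff.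
under eq_bigr do rewrite mulr_sumr.
rewrite exchange_big /=; apply: eq_bigr => t _; rewrite mulr_sumr.
by apply: eq_bigr => rs _; rewrite mulrCA.
Qed.

Lemma Unat_int y i j : (forall c, y c \is a Num.int) -> Unat y i j \is a Num.int.
Proof. move=> Hy; rewrite /Unat; case: pickP => [c _|_]; first exact: Hy. exact: natr_int. Qed.

Lemma Gg_int y : (forall c, y c \is a Num.int) -> forall rs, Gg y rs \is a Num.int.
Proof.
move=> Hy rs; have HW : forall i j, Wy y i j \is a Num.int.
  by move=> [|i] [|j] //=; exact: Unat_int.
by rewrite /Gg rpredD ?rpredB.
Qed.

Lemma Ff_int x : (forall rs, x rs \is a Num.int) -> forall c, Ff x c \is a Num.int.
Proof.
move=> Hx c; rewrite /Ff; apply: rpred_sum => rs _; rewrite rpredM //.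
exact: natr_int.
Qed.


Lemma Unat_FM mu i j : is_partition mu -> subpart lam mu -> subpart mu nu ->
  (i < m)%N -> (j < n)%N -> Unat (Ff (@Mmu R m n mu)) i j = (mu i <= j)%N%:R.
Proof.
move=> Pmu Hl Hu Hi Hj; rewrite /Unat; case: pickP => [c /andP[/eqP Ei /eqP Ej]|none].
  by rewrite FM // -Ei -Ej.
have nsk : ~~ ((lam i <= j)%N && (j < nu i)%N).
  apply/negP => sk.
  have := none (exist _ (Ordinal Hi, Ordinal Hj) sk); by rewrite /= !eqxx.
have := Hl i; have := Hu i; move: nsk.
case: (ltnP j (lam i)) => hj /= nsk h1 h2.
  suff -> : (mu i <= j)%N = false by [].
  lia.
suff -> : (mu i <= j)%N = true by [].
lia.
Qed.

Definition Vn (mu : nat -> nat) (i j : nat) : R :=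
  match i, j with i'.+1, j'.+1 => (mu i' <= j')%N%:R | _, _ => 0 end.

Lemma Vn_diff mu i s : Vn mu i.+1 s.+1 - Vn mu i.+1 s = (s == mu i)%N%:R.
Proof.
case: s => [|s] /=.
  by rewrite subr0; case: (mu i).
case: (leqP (mu i) s) => h.
  have -> : (mu i <= s.+1)%N = true by lia.
  have -> : (s.+1 == mu i) = false by lia.
  by rewrite subrr.
case: (eqVneq (s.+1) (mu i)) => e.
  by rewrite -e leqnn subr0.
have -> : (mu i <= s.+1)%N = false by lia.
by rewrite subrr.
Qed.

Lemma M_diff mu (rs : 'I_m * 'I_n) : is_partition mu ->
  @Mmu R m n mu rs = let r := nat_of_ord rs.1 in let s := nat_of_ord rs.2 in
    Vn mu r.+1 s.+1 - Vn mu r.+1 s - Vn mu r s.+1 + Vn mu r s.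
Proof.
move=> Pmu; rewrite /Mmu /=.
case: (nat_of_ord rs.1) => [|r] /=.
  by rewrite Vn_diff !subr0 addr0.
have -> : forall a b c d : R, a - b - c + d = (a - b) - (c - d) by move=> *; ring.
rewrite !Vn_diff.
have [Hlt|Hge] := ltnP (mu r.+1) (mu r) => //.
have -> : mu r.+1 = mu r.
  have := Pmu.1 r; move: Hge; lia.
by rewrite subrr.
Qed.

Lemma GF mu : is_partition mu -> subpart lam mu -> subpart mu nu ->
  Gg (Ff (@Mmu R m n mu)) = @Mmu R m n mu.
Proof.
move=> Pmu Hl Hu; apply: funext => rs.
have HW : forall i j, (i <= m)%N -> (j <= n)%N -> Wy (Ff (@Mmu R m n mu)) i j = Vn mu i j.
  move=> [|i] [|j] //= Hi Hj; exact: Unat_FM.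
rewrite /Gg M_diff //; cbv zeta; rewrite !HW //; try exact: ltnW; try exact: ltn_ord.
Qed.

Lemma FM_O mu : is_partition mu ->
  order_polytope (@skew_le m n lam nu) (Ff (@Mmu R m n mu)).
Proof.
move=> Pmu; split.
  by move=> p; rewrite FM //; case: leqP => _; rewrite ?lexx ?ler01.
move=> p q /andP[h1 h2]; rewrite !FM //.
case: (leqP (mu (val p).1) (val p).2) => h.
  suff -> : (mu (val q).1 <= (val q).2)%N by [].
  have := part_anti Pmu h1; lia.
by case: leqP.
Qed.


Hypotheses (Hn : (1 <= n)%N) (Plam : is_partition lam) (Pnu : is_partition nu)
  (Hsub : subpart lam nu) (Hbox : in_box n.-1 m.-1 nu).

Lemma nu_lt i : (nu i < n)%N.
Proof. have := Hbox.1 i; lia. Qed.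

Lemma nu_big i : (m <= i)%N -> nu i = 0%N.
Proof. move=> h; apply: Hbox.2; lia. Qed.

Lemma sk_bounds i j : (lam i <= j < nu i)%N -> (i < m)%N /\ (j < n)%N.
Proof.
move=> /andP[h1 h2]; split; last by have := nu_lt i; lia.
case: (ltnP i m) => // h; move: h2; rewrite nu_big //.
Qed.

Definition Ybool (P : pred PT) (i j : nat) : bool :=
  if [pick c : PT | ((val c).1 == i :> nat) && ((val c).2 == j :> nat)] is Some c
  then P c else ~~ (j < lam i)%N.

Lemma Ybool_sk P i j : (lam i <= j < nu i)%N ->
  exists c : PT, [/\ nat_of_ord (val c).1 = i, nat_of_ord (val c).2 = j & Ybool P i j = P c].
Proof.
move=> sk; have [Hi Hj] := sk_bounds sk.
rewrite /Ybool; case: pickP => [c /andP[/eqP Ei /eqP Ej]|none].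
  by exists c.
have := none (exist _ (Ordinal Hi, Ordinal Hj) sk); by rewrite /= !eqxx.
Qed.

Lemma Ybool_nsk P i j : ~~ (lam i <= j < nu i)%N -> Ybool P i j = ~~ (j < lam i)%N.
Proof.
move=> nsk; rewrite /Ybool; case: pickP => [c /andP[/eqP Ei /eqP Ej]|//].
have := valP c; rewrite /skew_cell Ei Ej => h; by rewrite h in nsk.
Qed.

Variable P : pred PT.
Hypothesis Pmono : forall p q, skew_le p q -> P p -> P q.

Lemma Y_j i j : Ybool P i j -> Ybool P i j.+1.
Proof.
have l1 := Hsub i.
case: (boolP (lam i <= j < nu i)%N) => sk.
  have [c [Ei Ej ->]] := Ybool_sk P sk => Pc.
  case: (boolP (lam i <= j.+1 < nu i)%N) => sk'.
    have [c' [Ei' Ej' ->]] := Ybool_sk P sk'.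
    apply: Pmono Pc; rewrite /skew_le Ei Ej Ei' Ej'; apply/andP; split => //.
  rewrite Ybool_nsk //; move: sk; lia.
rewrite Ybool_nsk // => h.
rewrite Ybool_nsk; move: sk h; lia.
Qed.

Lemma Y_i i j : Ybool P i j -> Ybool P i.+1 j.
Proof.
have l1 := Hsub i; have l2 := Hsub i.+1; have l3 := Plam.1 i; have l4 := Pnu.1 i.
case: (boolP (lam i <= j < nu i)%N) => sk.
  have [c [Ei Ej ->]] := Ybool_sk P sk => Pc.
  case: (boolP (lam i.+1 <= j < nu i.+1)%N) => sk'.
    have [c' [Ei' Ej' ->]] := Ybool_sk P sk'.
    apply: Pmono Pc; rewrite /skew_le Ei Ej Ei' Ej'; apply/andP; split => //.
  rewrite Ybool_nsk //; move: sk; lia.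
rewrite Ybool_nsk // => h.
rewrite Ybool_nsk; move: sk h; lia.
Qed.

Lemma find_char (b : pred nat) N : (forall j, b j -> b j.+1) -> (0 < N)%N -> b N.-1 ->
  (find b (iota 0 N) < N)%N /\ forall j, (j < N)%N -> (find b (iota 0 N) <= j)%N = b j.
Proof.
move=> bm N0 bN.
have hb : has b (iota 0 N).
  apply/hasP; exists N.-1 => //; rewrite mem_iota; lia.
have kN := hb; rewrite has_find size_iota in kN.
have bk := nth_find 0 hb; rewrite nth_iota // add0n in bk.
split => // j hj.
case: (leqP (find b (iota 0 N)) j) => h.
  apply/esym; elim: j h {hj} => [|j IH]; first by rewrite leqn0 => /eqP <-.
  rewrite leq_eqVlt => /orP[/eqP <- //|]; rewrite ltnS => /IH; exact: bm.
have := before_find 0 h; rewrite nth_iota // add0n => ->.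
Qed.

Definition muP (i : nat) : nat := find (Ybool P i) (iota 0 n).

Lemma muP_char i : (muP i < n)%N /\ forall j, (j < n)%N -> (muP i <= j)%N = Ybool P i j.
Proof.
apply: find_char => //; first exact: Y_j.
have l1 := Hsub i; have l2 := nu_lt i.
rewrite Ybool_nsk; lia.
Qed.

Lemma muP_valid : [/\ is_partition muP, subpart lam muP, subpart muP nu &
  Ff (@Mmu R m n muP) = fun c => (P c)%:R].
Proof.
have Yk i : Ybool P i (muP i).
  have [h1 h2] := muP_char i; by rewrite -h2.
split.
- split.
    move=> i; have [h1 h2] := muP_char i.+1; rewrite h2 ?(muP_char i).1 //.
    exact: Y_i.
  exists m => i hi; have [h1 h2] := muP_char i; apply/eqP; rewrite -leqn0 h2 //.
  have l1 := Hsub i; rewrite nu_big // in l1.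
  rewrite Ybool_nsk; first lia.
  rewrite nu_big //; lia.
- move=> i; rewrite leqNgt; apply/negP => h.
  have := Yk i; rewrite Ybool_nsk ?h //; lia.
- move=> i; have [h1 h2] := muP_char i; rewrite h2 ?nu_lt //.
  have := Hsub i => l; rewrite Ybool_nsk; lia.
- apply: funext => c; rewrite FM.
  + have [h1 h2] := muP_char (val c).1; rewrite h2 //.
    have := valP c; rewrite /skew_cell => sk.
    have [c' [Ei Ej ->]] := Ybool_sk P sk.
    suff -> : c' = c by [].
    apply: val_inj; case: (val c') Ei Ej => a b /= Ei Ej.
    case: (val c) Ei Ej => a' b' /= Ei Ej.
    by congr pair; apply: val_inj.
  + split.
      move=> i; have [h1 h2] := muP_char i.+1; rewrite h2 ?(muP_char i).1 //.
      exact: Y_i.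
    exists m => i hi; have [h1 h2] := muP_char i; apply/eqP; rewrite -leqn0 h2 //.
    have l1 := Hsub i; rewrite nu_big // in l1.
    rewrite Ybool_nsk; first lia.
    rewrite nu_big //; lia.
Qed.

End Main.

Section Fin.
Variables (R : realType) (m n : nat) (lam nu : nat -> nat).
Local Notation PT := (skew_poset m n lam nu).
Hypotheses (Hn : (1 <= n)%N) (Plam : is_partition lam) (Pnu : is_partition nu)
  (Hsub : subpart lam nu) (Hbox : in_box n.-1 m.-1 nu).

Local Notation FF := (@Ff R m n lam nu).
Local Notation OP := (@order_polytope R _ (@skew_le m n lam nu)).

Lemma Ff_lin a b u v :
  FF (fun i => a * u i + b * v i) = fun c => a * FF u c + b * FF v c.
Proof.
apply: funext => c; rewrite /Ff.
under eq_bigr do rewrite mulrDr mulrCA [_ * (b * _)]mulrCA.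
by rewrite big_split /= -!mulr_sumr.
Qed.

Lemma OP_conv k (q : 'I_k -> PT -> R) (w : 'I_k -> R) :
  (forall t, OP (q t)) -> (forall t, 0 <= w t) -> \sum_(t < k) w t = 1 ->
  OP (fun c => \sum_(t < k) w t * q t c).
Proof.
move=> Hq Hw Hs; split.
  move=> p; apply/andP; split.
    apply: sumr_ge0 => t _; apply: mulr_ge0 => //; by case/andP: ((Hq t).1 p).
  rewrite -Hs; apply: ler_sum => t _; rewrite -[X in _ <= X]mulr1.
  apply: ler_wpM2l => //; by case/andP: ((Hq t).1 p).
move=> p p' le; apply: ler_sum => t _; apply: ler_wpM2l => //.
exact: (Hq t).2.
Qed.

Lemma PASM_O x : @PASM R m n lam nu x -> OP (FF x).
Proof.
move=> [k [p [w [H1 [H2 [H3 H4]]]]]].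
have -> : x = (fun i => \sum_(t < k) w t * p t i) by apply: funext.
rewrite Ff_comb //; apply: OP_conv => // t.
have [mu [Pmu _ _ ->]] := H1 t; exact: FM_O.
Qed.

Lemma GFid x : aff (@PASM R m n lam nu) x -> Gg (FF x) = x.
Proof.
have cH : combp (fun x => Gg (FF x)).
  exact: combp_comp (@Ff_comb _ _ _ _ _) (@Gg_comb _ _ _ _ _).
move=> Hx; apply: (aff_id cH _ Hx) => s Ps.
apply: (aff_id cH _ (conv_aff Ps)).
move=> v [mu [Pmu Hl Hu ->]]; exact: GF.
Qed.

Definition cnt (y : PT -> R) := #|[pred p | (0 < y p) && (y p < 1)]|.

Lemma cnt_lt y z q : (forall p, (0 < z p) && (z p < 1) -> (0 < y p) && (y p < 1)) ->
  (0 < y q) && (y q < 1) -> ~~ ((0 < z q) && (z q < 1)) -> (cnt z < cnt y)%N.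
Proof.
move=> H Hq Hz; rewrite /cnt; apply: proper_card; apply/properP; split.
  apply/subsetP => p; rewrite !inE; exact: H.
by exists q; rewrite !inE.
Qed.

Lemma surjO y : OP y -> exists x, @PASM R m n lam nu x /\ FF x = y.
Proof.
have [N] := ubnP (cnt y).
elim: N y => // N IH y HN Hy.
case: (pickP [pred p | (0 < y p) && (y p < 1)]) => [p0 /andP[h0 h1]|none].
  have [q Pq Hmin] := @arg_minP _ _ _ p0 (fun p => 0 < y p) y h0.
  set a := y q.
  have a0 : 0 < a by [].
  have a1 : a < 1 by apply: le_lt_trans (Hmin _ h0) h1.
  set P : pred PT := fun p => 0 < y p.
  have Pmono : forall p p', skew_le p p' -> P p -> P p'.
    move=> p p' le; rewrite /P => h; exact: lt_le_trans h (Hy.2 _ _ le).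
  have [Pm Hl Hu HF] := muP_valid R Hn Plam Pnu Hsub Hbox Pmono.
  set z := fun p => if 0 < y p then (y p - a) / (1 - a) else 0.
  have a1' : 0 < 1 - a by rewrite subr_gt0.
  have Hz : OP z.
    split.
      move=> p; rewrite /z; case: ifP => hp; last by rewrite lexx ler01.
      have := Hmin p hp; have := (Hy.1 p) => /andP[_ yp1] ha.
      apply/andP; split.
        by apply: divr_ge0; rewrite ?subr_ge0 // ltW.
      by rewrite ler_pdivrMr // mul1r; apply: lerB.
    move=> p p' le; rewrite /z.
    have := Hy.2 _ _ le => le'.
    case: ifP => hp; last first.
      case: ifP => // hp'; have := Hmin p' hp'.
      move=> ha; apply: divr_ge0; rewrite ?subr_ge0 // ltW //.
    have hp' : 0 < y p' by exact: lt_le_trans hp le'.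
    rewrite hp' ler_pM2r ?invr_gt0 //; exact: lerB.
  have Hcard : (cnt z < N)%N.
    rewrite ltnS in HN; apply: leq_trans HN; apply: (cnt_lt (q := q)).
    - move=> p; rewrite /z; case: ifP => hp; last by rewrite ltxx.
      have := Hmin p hp => ha.
      move=> /andP[h2 h3]; apply/andP; split => //.
      move: h3; rewrite ltr_pdivrMr // mul1r; lra.
    - by apply/andP; split.
    - by rewrite /z Pq subrr mul0r ltxx.
  have [xz [Pxz Fxz]] := IH z Hcard Hz.
  exists (fun i => a * @Mmu R m n (muP P) i + (1 - a) * xz i); split.
    apply: conv_comb => //; first by exists (muP P).
    by rewrite (ltW a0) (ltW a1).
  rewrite Ff_lin HF Fxz; apply: funext => p; rewrite /z /P.
  case: ifP => hp /=.
    rewrite mulr1 mulrCA divff ?mulr1; last by rewrite lt0r_neq0.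
    by rewrite addrC subrK.
  rewrite mulr0 mulr0 addr0.
  have := (Hy.1 p) => /andP[yp0 _]; apply/eqP; rewrite eq_le yp0 /=.
  by rewrite leNgt hp.
set P : pred PT := fun p => y p == 1.
have Pmono : forall p p', skew_le p p' -> P p -> P p'.
  move=> p p' le; rewrite /P => /eqP h.
  have := Hy.2 _ _ le; have := Hy.1 p'; rewrite h => /andP[_ h1] h2.
  apply/eqP; apply: le_anti; by rewrite h1 h2.
have [Pm Hl Hu HF] := muP_valid R Hn Plam Pnu Hsub Hbox Pmono.
exists (@Mmu R m n (muP P)); split.
  by apply: conv_pt; exists (muP P).
rewrite HF; apply: funext => p; rewrite /P.
case: eqP => [->//|ne] /=.
have := none p; have := Hy.1 p => /andP[yp0 yp1] /=.
have yl : y p < 1 by rewrite lt_neqAle yp1 andbT; apply/eqP.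
rewrite yl andbT => /negbT; rewrite -leNgt => h.
by apply/eqP; rewrite eq_le h yp0.
Qed.

End Fin.

Lemma aff_pt (R : realType) {I : finType} (S : (I -> R) -> Prop) x : S x -> aff S x.
Proof.
move=> Sx; exists 1%N, (fun _ => x), (fun _ => 1); split => //.
split; first by rewrite big_ord1.
by move=> i; rewrite big_ord1 mul1r.
Qed.

Theorem theorem3 (R : realType) (m n : nat) (lam nu : nat -> nat) :
  (1 <= m)%N -> (1 <= n)%N ->
  is_partition lam -> is_partition nu ->
  subpart lam nu -> in_box n.-1 m.-1 nu ->
  integrally_equivalent (@PASM R m n lam nu)
                        (@order_polytope R _ (@skew_le m n lam nu)).
Proof.
move=> Hm Hn Plam Pnu Hsub Hbox.
have GFid := @GFid R m n lam nu.
exists (@Ff R m n lam nu); split.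
- exists (@Acoef R m n lam nu), (fun _ => 0) => x c; by rewrite add0r.
- split.
  + exact: PASM_O.
  + move=> x y Px Py E.
    by rewrite -(GFid x (aff_pt Px)) -(GFid y (aff_pt Py)) E.
  + move=> y Hy; exact: surjO.
- split.
  + move=> x [Hint Haff]; split; first exact: Ff_int.
    case: Haff => k [p [w [H1 [H2 H3]]]].
    have -> : x = (fun i => \sum_(t < k) w t * p t i) by apply: funext.
    rewrite Ff_comb //; exists k, (fun t => Ff (p t)), w; split => //.
    by move=> t; apply: PASM_O.
  + move=> x y [_ Hx] [_ Hy] E.
    by rewrite -(GFid x Hx) -(GFid y Hy) E.
  + move=> y [Hyint [k [q [w [Hq [Hw Hy]]]]]].
    have Hex : forall t, exists x, @PASM R m n lam nu x /\ Ff x = q t.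
      by move=> t; apply: surjO.
    have [f Hf] := choice Hex.
    set x := fun i => \sum_(t < k) w t * f t i.
    have Hax : aff (@PASM R m n lam nu) x.
      by exists k, f, w; split => // t; case: (Hf t).
    have Fx : Ff x = y.
      rewrite /x Ff_comb //; apply: funext => c; rewrite Hy.
      by apply: eq_bigr => t _; rewrite (Hf t).2.
    exists x; split => //; split => //.
    rewrite -(GFid x Hax) Fx; exact: Gg_int.
Qed.
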